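(* Let $P_{\mathcal{F}}$ be the probability measure on $\mathscr{P}(2^\omega)$ which is the distribution of $\lambda\circ F_x^{-1}$ when $x\in3^\omega$ is drawn according to $\lambda_3$. Then $P_{\mathcal{F}}$ has barycenter $\lambda$, i.e. for every $\sigma\in2^{<\omega}$, $$\lambda(\llbracket\sigma\rrbracket)=\int_{\mathscr{P}(2^\omega)}\mu(\llbracket\sigma\rrbracket)\,dP_{\mathcal{F}}(\mu),$$ equivalently $\int_{3^\omega}\lambda(F_x^{-1}(\llbracket\sigma\rrbracket))\,d\lambda_3(x)=2^{-|\sigma|}$.
   Context: $\lambda$ is the uniform measure on $2^\omega$ and $\lambda_3$ the uniform measure on $3^\omega$ ($\lambda_3(\llbracket\sigma\rrbracket)=3^{-|\sigma|}$). Let $\sigma_0=\epsilon,\sigma_1=0,\sigma_2=1,\dots$ be the length-lexicographic enumeration of $2^{<\omega}$. For $x\in3^\omega$ label node $\sigma_i$ ($i\ge1$) by $\ell_x(\sigma_i)=x(i-1)$, and let $F_x(y)$ be the sequence obtained from $\ell_x(y\restriction1),\ell_x(y\restriction2),\dots$ by deleting all $2$'s (undefined if only finitely many entries remain). For $\lambda_3$-almost every $x$, $F_x$ is total, so $\lambda\circ F_x^{-1}$ is a Borel probability measure on $2^\omega$. *)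

(* Defs.v *)
From HB Require Import structures.
From mathcomp Require Import all_boot all_order all_algebra.
From mathcomp Require Import all_classical all_reals all_analysis.
Set Implicit Arguments. Unset Strict Implicit. Unset Printing Implicit Defensive.
Import Order.TTheory GRing.Theory Num.Theory.
Local Open Scope classical_set_scope.

Definition three := 'I_3.
HB.instance Definition _ := Finite.on three.
HB.instance Definition _ := isPointed.Build three (@ord0 2).

Definition cyl {A : Type} (d : A) (s : seq A) : set (nat -> A) :=
  [set y | forall i, (i < size s)%N -> y i = nth d s i].

Definition cylinders2 : set (set (nat -> bool)) := [set cyl false s | s in [set: seq bool]].
Definition cylinders3 : set (set (nat -> three)) :=
  [set cyl (@ord0 2 : three) s | s in [set: seq three]].

(* 2^omega and 3^omega with the sigma-algebra generated by cylinders
   (= Borel sigma-algebra of the product topology). *)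
Definition Cantor2 := g_sigma_algebraType cylinders2.
Definition Cantor3 := g_sigma_algebraType cylinders3.

(* Length-lexicographic index of a binary word: sigma_0 = eps, sigma_1 = 0,
   sigma_2 = 1, sigma_3 = 00, ...; the index of s is 2^|s| - 1 + (s read in binary). *)
Definition binval (s : seq bool) : nat := foldl (fun acc (b : bool) => acc.*2 + b) 0 s.
Definition node_index (s : seq bool) : nat := (2 ^ size s - 1 + binval s)%N.

Definition ell (x : nat -> three) (s : seq bool) : three := x (node_index s).-1.

(* The label sequence ell_x(y|1), ell_x(y|2), ... (indexed from 0). *)
Definition labels (x : nat -> three) (y : nat -> bool) : nat -> three :=
  fun n => ell x (mkseq y n.+1).

(* delete2 s z : z is the sequence obtained from s by deleting all 2's, and
   infinitely many entries remain (g enumerates increasingly the positions of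
   the non-2 entries; 0 is read as false, 1 as true). *)
Definition delete2 (s : nat -> three) (z : nat -> bool) : Prop :=
  exists g : nat -> nat,
    (forall n, (g n < g n.+1)%N) /\
    (forall k, (nat_of_ord (s k) != 2%N) <-> exists n, g n = k) /\
    (forall n, z n = (nat_of_ord (s (g n)) == 1%N)).

(* F_x(y) = z  (F_x is partial). *)
Definition F_rel (x : nat -> three) (y : nat -> bool) (z : nat -> bool) : Prop :=
  delete2 (labels x y) z.

Definition F_preimage (x : nat -> three) (sigma : seq bool) : set Cantor2 :=
  [set y | exists z, F_rel x y z /\ cyl false sigma z].

(* Main.v *)
Require Import Defs.
From HB Require Import structures.
From mathcomp Require Import all_boot all_order all_algebra.
From mathcomp Require Import all_classical all_reals all_analysis.
From mathcomp Require Import zify ring lra.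
Import Order.TTheory GRing.Theory Num.Theory.
Local Open Scope classical_set_scope.
Set Implicit Arguments. Unset Strict Implicit. Unset Printing Implicit Defensive.

Definition nd2 (c : three) : bool := nat_of_ord c != 2%N.
Definition hb (c : three) : seq bool :=
  if nd2 c then [:: nat_of_ord c == 1%N] else [::].
Fixpoint bitsr (s : nat -> three) (n : nat) : seq bool :=
  match n with 0 => [::] | n'.+1 => bitsr s n' ++ hb (s n') end.
Definition Inf (s : nat -> three) : Prop :=
  forall N, exists n, (N <= n)%N && nd2 (s n).
Definition Pref (sg : seq bool) (s : nat -> three) : Prop :=
  exists n, bitsr s n = sg.
Definition Dset (sg : seq bool) : set (nat -> three) :=
  [set s | exists z, delete2 s z /\ cyl false sg z].

Lemma bitsr_shift s n : bitsr s n.+1 = hb (s 0%N) ++ bitsr (fun k => s k.+1) n.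
Proof.
elim: n => [|n IH] /=; first by rewrite cats0.
by rewrite /= in IH; rewrite IH catA.
Qed.

Lemma bitsr_ext s s' n : (forall i, (i < n)%N -> s i = s' i) ->
  bitsr s n = bitsr s' n.
Proof.
elim: n => [//|n IH] h /=; rewrite IH ?h // => i hi; apply: h; exact: ltnW.
Qed.

Lemma size_hb c : size (hb c) = nd2 c.
Proof. by rewrite /hb; case: (nd2 c). Qed.

Lemma size_bitsrS s n : size (bitsr s n.+1) = (size (bitsr s n) + nd2 (s n))%N.
Proof. by rewrite /= size_cat size_hb. Qed.

Section smono.
Variable g : nat -> nat.
Hypothesis hg : forall n, (g n < g n.+1)%N.
Lemma smono_lt a b : (a < b)%N -> (g a < g b)%N.
Proof.
elim: b => // b IH; rewrite ltnS leq_eqVlt => /orP[/eqP->|/IH H]; first exact: hg.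
exact: ltn_trans H (hg b).
Qed.
Lemma smono_le a b : (a <= b)%N -> (g a <= g b)%N.
Proof. by rewrite leq_eqVlt => /orP[/eqP->//|/smono_lt/ltnW]. Qed.
Lemma smono_ltE a b : (g a < g b)%N -> (a < b)%N.
Proof. by move=> h; rewrite ltnNge; apply/negP => /smono_le; rewrite leqNgt h. Qed.
Lemma smono_ge n : (n <= g n)%N.
Proof. elim: n => // n IH; exact: leq_ltn_trans IH (hg n). Qed.
End smono.

Lemma flat_size s a d : (forall k, (a <= k < a + d)%N -> ~~ nd2 (s k)) ->
  size (bitsr s (a + d)) = size (bitsr s a).
Proof.
elim: d => [|d IH] h; first by rewrite addn0.
rewrite addnS size_bitsrS IH; last by move=> k /andP[h1 h2]; apply: h; rewrite h1 /= addnS ltnS ltnW.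
rewrite (negbTE (h (a + d)%N _)) ?addn0 // leq_addr /= addnS ltnS leqnn //.
Qed.

Section del.
Variables (s : nat -> three) (z : nat -> bool) (g : nat -> nat).
Hypothesis hg : forall n, (g n < g n.+1)%N.
Hypothesis hk : forall k, (nat_of_ord (s k) != 2%N) <-> exists n, g n = k.
Hypothesis hz : forall n, z n = (nat_of_ord (s (g n)) == 1%N).

Lemma sizeb n : size (bitsr s (g n)) = n.
Proof.
elim: n => [|n IH].
  rewrite -(add0n (g 0%N)) flat_size // => k /andP[_ hk0]; apply/negP => /hk[m hm].
  by move: hk0; rewrite add0n -hm ltnNge smono_le.
have -> : g n.+1 = ((g n).+1 + (g n.+1 - (g n).+1))%N by rewrite subnKC.
rewrite flat_size; last first.
  move=> k /andP[h1 h2]; apply/negP => /hk[m hm]; subst k.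
  rewrite subnKC // in h2.
  have := smono_ltE hg h2; have := smono_ltE hg h1; rewrite ltnS => a b.
  by move: (leq_trans a b); rewrite ltnn.
rewrite size_bitsrS IH.
have e : nd2 (s (g n)) by exact: (proj2 (hk (g n)) (ex_intro _ n erefl)).
by rewrite e addn1.
Qed.

Lemma bits_mk N : bitsr s N = mkseq z (size (bitsr s N)).
Proof.
elim: N => [//|N IH]; rewrite size_bitsrS.
case h: (nd2 (s N)).
  have [n hn] := proj1 (hk N) h.
  rewrite addn1 mkseqS /= -IH -cats1 /hb h; congr (_ ++ [:: _]).
  by rewrite -hn sizeb hz.
by rewrite addn0 /= {1}IH /hb h cats0.
Qed.

Lemma cyl_pref sg : cyl false sg z <-> Pref sg s.
Proof.
split.
  move=> hc.
  exists (if size sg is k.+1 then (g k).+1 else 0%N).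
  have hs : size (bitsr s (if size sg is k.+1 then (g k).+1 else 0%N)) = size sg.
    case e: (size sg) => [//|k]; rewrite size_bitsrS sizeb.
    have e2 : nd2 (s (g k)) by exact: (proj2 (hk (g k)) (ex_intro _ k erefl)).
    by rewrite e2 addn1.
  rewrite bits_mk hs; apply: (@eq_from_nth _ false); rewrite size_mkseq // => i hi.
  by rewrite nth_mkseq // hc.
move=> [N hN] i hi; rewrite -hN in hi *; rewrite bits_mk nth_mkseq //.
Qed.

Lemma del_inf : Inf s.
Proof.
move=> N; exists (g N); rewrite smono_ge //=.
exact: (proj2 (hk (g N)) (ex_intro _ N erefl)).
Qed.
End del.

Definition nxt s (h : Inf s) N : nat :=
  @ex_minn (fun n => (N <= n)%N && nd2 (s n)) (h N).

Lemma nxt_spec s (h : Inf s) N : ((N <= nxt h N)%N && nd2 (s (nxt h N))) /\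
  forall k, (N <= k)%N && nd2 (s k) -> (nxt h N <= k)%N.
Proof. rewrite /nxt; case: ex_minnP => m Pm minm; split => //. Qed.

Fixpoint genum s (h : Inf s) n : nat :=
  match n with 0 => nxt h 0 | n'.+1 => nxt h (genum h n').+1 end.

Lemma inf_del s : Inf s -> exists z, exists g, (forall n, (g n < g n.+1)%N) /\
  (forall k, (nat_of_ord (s k) != 2%N) <-> exists n, g n = k) /\
  (forall n, z n = (nat_of_ord (s (g n)) == 1%N)).
Proof.
move=> h; exists (fun n => nat_of_ord (s (genum h n)) == 1%N), (genum h).
have hg : forall n, (genum h n < genum h n.+1)%N.
  by move=> n /=; case/andP: (proj1 (nxt_spec h (genum h n).+1)).
split => //; split => // k; split; last first.
  move=> [[|n] <-] /=; [case/andP: (proj1 (nxt_spec h 0%N)) |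
    case/andP: (proj1 (nxt_spec h (genum h n).+1))] => //.
move=> hk.
have cover : forall k, (k < genum h 0)%N \/ exists n, (genum h n <= k < genum h n.+1)%N.
  elim => [|j [lt|[n /andP[h1 h2]]]].
  - case e: (genum h 0) => [|a]; last by left.
    right; exists 0%N; rewrite {1}e leqnn andTb.
    exact: leq_ltn_trans (leq0n _) (hg 0%N).
  - rewrite leq_eqVlt in lt; case/orP: lt => [/eqP e|lt]; last by left.
    right; exists 0%N; rewrite -e leqnn andTb e; exact: (hg 0%N).
  - rewrite leq_eqVlt in h2; case/orP: h2 => [/eqP e|lt].
      right; exists n.+1; rewrite -e leqnn andTb e; exact: (hg n.+1).
    by right; exists n; rewrite lt andbT ltnW // ltnS.
have hk' : nd2 (s k) := hk.
case: (cover k) => [lt|[n /andP[h1 h2]]].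
  have := (proj2 (nxt_spec h 0%N)) k; rewrite hk' /= => /(_ isT).
  by rewrite /= leqNgt lt.
exists n; apply/eqP; rewrite eqn_leq h1 /=; rewrite leqNgt; apply/negP => lt.
have := (proj2 (nxt_spec h (genum h n).+1)) k; rewrite lt hk' => /(_ isT).
by rewrite /= leqNgt h2.
Qed.

Lemma Dset_char sg s : Dset sg s <-> Inf s /\ Pref sg s.
Proof.
split.
  move=> [z [[g [hg [hk hz]]] hc]]; split; first exact: (del_inf hg hk).
  exact/(cyl_pref hg hk hz).
move=> [hi hp]; have [z [g [hg [hk hz]]]] := inf_del hi.
exists z; split; first by exists g.
exact/(cyl_pref hg hk hz).
Qed.

Lemma fd3 (Q : (nat -> three) -> Prop) m :
  (forall s s', (forall i, (i < m)%N -> s i = s' i) -> Q s -> Q s') ->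
  measurable ([set s | Q s] : set Cantor3).
Proof.
move=> hQ.
have -> : ([set s | Q s] : set Cantor3) = \bigcup_j [set s : Cantor3 | exists t,
    unpickle j = Some t /\ size t = m /\ Q (fun i => nth ord0 t i) /\ cyl ord0 t s].
  apply/seteqP; split.
    move=> s /= Qs; exists (pickle (mkseq s m)) => //; exists (mkseq s m).
    rewrite pickleK size_mkseq; split => //; split => //; split.
      by apply: (hQ s) => // i hi; rewrite nth_mkseq.
    by move=> i; rewrite size_mkseq => hi; rewrite nth_mkseq.
  move=> s [j _ [t [_ [ht [hq hc]]]]]; apply: (hQ _ s _ hq) => i hi.
  by rewrite hc // ht.
apply: bigcupT_measurable => j.
case: (unpickle j) => [t|]; last first.
  have -> : [set s : Cantor3 | exists t, None = Some t /\ size t = m /\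
      Q (fun i => nth ord0 t i) /\ cyl ord0 t s] = set0.
    by apply/seteqP; split => // s [? []].
  exact: measurable0.
case: (pselect (size t = m /\ Q (fun i => nth ord0 t i))) => [[h1 h2]|hn].
  have -> : [set s : Cantor3 | exists t0, Some t = Some t0 /\ size t0 = m /\
      Q (fun i => nth ord0 t0 i) /\ cyl ord0 t0 s] = cyl ord0 t.
    apply/seteqP; split => s /=; first by move=> [t0 [[<-] [_ [_ ?]]]].
    by move=> hs; exists t.
  by apply: sub_sigma_algebra; exists t.
have -> : [set s : Cantor3 | exists t0, Some t = Some t0 /\ size t0 = m /\
    Q (fun i => nth ord0 t0 i) /\ cyl ord0 t0 s] = set0.
  by apply/seteqP; split => // s [t0 [[<-] [h1 [h2 _]]]]; apply: hn.
exact: measurable0.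
Qed.

Lemma fd2 (Q : (nat -> bool) -> Prop) m :
  (forall s s', (forall i, (i < m)%N -> s i = s' i) -> Q s -> Q s') ->
  measurable ([set s | Q s] : set Cantor2).
Proof.
move=> hQ.
have -> : ([set s | Q s] : set Cantor2) = \bigcup_j [set s : Cantor2 | exists t,
    unpickle j = Some t /\ size t = m /\ Q (fun i => nth false t i) /\ cyl false t s].
  apply/seteqP; split.
    move=> s /= Qs; exists (pickle (mkseq s m)) => //; exists (mkseq s m).
    rewrite pickleK size_mkseq; split => //; split => //; split.
      by apply: (hQ s) => // i hi; rewrite nth_mkseq.
    by move=> i; rewrite size_mkseq => hi; rewrite nth_mkseq.
  move=> s [j _ [t [_ [ht [hq hc]]]]]; apply: (hQ _ s _ hq) => i hi.
  by rewrite hc // ht.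
apply: bigcupT_measurable => j.
case: (unpickle j) => [t|]; last first.
  have -> : [set s : Cantor2 | exists t, None = Some t /\ size t = m /\
      Q (fun i => nth false t i) /\ cyl false t s] = set0.
    by apply/seteqP; split => // s [? []].
  exact: measurable0.
case: (pselect (size t = m /\ Q (fun i => nth false t i))) => [[h1 h2]|hn].
  have -> : [set s : Cantor2 | exists t0, Some t = Some t0 /\ size t0 = m /\
      Q (fun i => nth false t0 i) /\ cyl false t0 s] = cyl false t.
    apply/seteqP; split => s /=; first by move=> [t0 [[<-] [_ [_ ?]]]].
    by move=> hs; exists t.
  by apply: sub_sigma_algebra; exists t.
have -> : [set s : Cantor2 | exists t0, Some t = Some t0 /\ size t0 = m /\
    Q (fun i => nth false t0 i) /\ cyl false t0 s] = set0.
  by apply/seteqP; split => // s [t0 [[<-] [h1 [h2 _]]]]; apply: hn.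
exact: measurable0.
Qed.

Lemma mcyl3 t : measurable (cyl ord0 t : set Cantor3).
Proof. by apply: sub_sigma_algebra; exists t. Qed.
Lemma mcyl2 t : measurable (cyl false t : set Cantor2).
Proof. by apply: sub_sigma_algebra; exists t. Qed.

Lemma mcoord3 k (v : three) : measurable ([set x | x k = v] : set Cantor3).
Proof. by apply: (@fd3 _ k.+1) => s s' h; rewrite h. Qed.

Definition comp3 (iota : nat -> nat) (x : Cantor3) : Cantor3 := fun n => x (iota n).

Lemma mcomp3 iota : measurable_fun setT (comp3 iota).
Proof.
apply: (@measurability _ _ _ Cantor3 setT _ cylinders3 erefl).
move=> _ [A [t _ <-] <-]; rewrite setTI.
have -> : comp3 iota @^-1` cyl ord0 t = \bigcap_i
    [set x : Cantor3 | (i < size t)%N -> x (iota i) = nth ord0 t i].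
  by apply/seteqP; split => x /= h i; [move=> _ hi; exact: h | move=> hi; exact: h].
apply: bigcapT_measurable => i.
apply: (@fd3 _ (iota i).+1) => s s' h hs hi; rewrite -h //; exact: hs.
Qed.

Lemma meq d (T : semiRingOfSetsType d) (B A : set T) : A = B -> measurable B -> measurable A.
Proof. by move->. Qed.

Definition Psi (p : Cantor3 * Cantor2) : Cantor3 := labels p.1 p.2.

Lemma mfst_pre (B : set Cantor3) : measurable B ->
  measurable (fst @^-1` B : set (Cantor3 * Cantor2)).
Proof. by move=> mB; have := @measurable_fst _ _ Cantor3 Cantor2 measurableT _ mB; rewrite setTI. Qed.
Lemma msnd_pre (B : set Cantor2) : measurable B ->
  measurable (snd @^-1` B : set (Cantor3 * Cantor2)).
Proof. by move=> mB; have := @measurable_snd _ _ Cantor3 Cantor2 measurableT _ mB; rewrite setTI. Qed.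

Lemma mPsi : measurable_fun setT Psi.
Proof.
apply: (@measurability _ _ _ Cantor3 setT _ cylinders3 erefl).
move=> _ [A [t _ <-] <-]; rewrite setTI.
have -> : Psi @^-1` cyl ord0 t = \bigcap_i
    [set p : Cantor3 * Cantor2 | (i < size t)%N -> Psi p i = nth ord0 t i].
  by apply/seteqP; split => x /= h i; [move=> _ hi; exact: h | move=> hi; exact: h].
apply: bigcapT_measurable => i.
change (measurable [set p : Cantor3 * Cantor2 | (i < size t)%N -> Psi p i = nth ord0 t i]).
case: (ltnP i (size t)) => hi.
  apply: (@meq _ (Cantor3 * Cantor2)%type (\bigcup_k (snd @^-1` [set y : Cantor2 | (node_index (mkseq y i.+1)).-1 = k]
        `&` fst @^-1` [set x : Cantor3 | x k = nth ord0 t i]))).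
    apply/seteqP; split => p /=.
      by move=> h; exists (node_index (mkseq p.2 i.+1)).-1 => //; split => //; exact: h.
    by move=> [k _ [h1 h2]] _; rewrite /Psi /labels /ell h1.
  apply: bigcupT_measurable => k; apply: measurableI.
    apply: msnd_pre; apply: (@fd2 _ i.+1) => s s' h <-.
    congr (node_index _).-1; apply/eq_in_map => j; rewrite mem_iota add0n => /andP[_ hj]; by rewrite h.
  exact: (mfst_pre (mcoord3 k (nth ord0 t i))).
apply: (@meq _ (Cantor3 * Cantor2)%type setT).
  by apply/seteqP; split => p //= _; rewrite ltnNge hi.
exact: measurableT.
Qed.

Lemma mInf : measurable (Inf : set Cantor3).
Proof.
have -> : (Inf : set Cantor3) =
    \bigcap_N \bigcup_n [set s : Cantor3 | (N <= n)%N && nd2 (s n)].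
  apply/seteqP; split => s h N.
    by move=> _; have [n hn] := h N; exists n.
  by have [n _ hn] := h N I; exists n.
apply: bigcapT_measurable => N; apply: bigcupT_measurable => n.
by apply: (@fd3 _ n.+1) => s s' h; rewrite h.
Qed.

Lemma mPref sg : measurable (Pref sg : set Cantor3).
Proof.
have -> : (Pref sg : set Cantor3) = \bigcup_n [set s : Cantor3 | bitsr s n = sg].
  by apply/seteqP; split => s [n]; [move=> h; exists n | move=> _ h; exists n].
apply: bigcupT_measurable => n.
by apply: (@fd3 _ n) => s s' h <-; apply/esym/bitsr_ext.
Qed.

Lemma Dset_eq sg : Dset sg = Inf `&` Pref sg.
Proof. by apply/seteqP; split => s /Dset_char. Qed.

Lemma mDset sg : measurable (Dset sg : set Cantor3).
Proof. rewrite Dset_eq; apply: measurableI; [exact: mInf | exact: mPref]. Qed.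

Lemma cylT : cyl (@ord0 2 : three) [::] = (setT : set Cantor3).
Proof. by apply/seteqP; split => x. Qed.

Lemma cylI (s t : seq three) : (size s <= size t)%N ->
  (cyl ord0 s `&` cyl ord0 t = cyl ord0 t) \/ (cyl ord0 s `&` cyl ord0 t = set0 :> set Cantor3).
Proof.
move=> hst.
case: (pselect (forall i, (i < size s)%N -> nth ord0 s i = nth ord0 t i)) => [h|h].
  left; apply/seteqP; split => x; first by case.
  move=> hx; split => // i hi; rewrite hx ?h //; exact: leq_trans hi hst.
right; apply/seteqP; split => x // [hs ht]; apply: h => i hi.
rewrite -hs // ht //; exact: leq_trans hi hst.
Qed.

Section meas.
Variable R : realType.
Local Open Scope ereal_scope.

Lemma uniq3 (m1 m2 : measure Cantor3 R) : m1 setT < +oo ->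
  (forall t, m1 (cyl ord0 t) = m2 (cyl ord0 t)) ->
  forall A, measurable A -> m1 A = m2 A.
Proof.
move=> fin h A mA.
pose G : set (set Cantor3) := [set B | B = set0 \/ exists t, B = cyl ord0 t].
apply: (measure_unique G (fun _ => setT)) => //.
- apply/seteqP; split.
    apply: smallest_sub; first exact: smallest_sigma_algebra.
    by move=> _ [t _ <-]; apply: sub_sigma_algebra; right; exists t.
  apply: smallest_sub; first exact: sigma_algebra_measurable.
  by move=> B [->|[t ->]]; [exact: measurable0 | exact: mcyl3].
- move=> B C [->|[s ->]]; first by rewrite set0I; left.
  move=> [->|[t ->]]; first by rewrite setI0; left.
  case: (leqP (size s) (size t)) => hst.
    by case: (cylI hst) => ->; [right; exists t | left].
  by rewrite setIC; case: (cylI (ltnW hst)) => ->; [right; exists s | left].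
- by move=> _; right; exists [::]; rewrite cylT.
- by apply/seteqP; split => x // _; exists 0%N.
- by move=> B [->|[t ->]]; [rewrite !measure0 | exact: h].
Qed.

Definition pf (m : measure Cantor3 R) iota : measure Cantor3 R :=
  measure_function_pushforward__canonical__measure_function_Measure m (mcomp3 iota).

Lemma pfE m iota A : pf m iota A = m (comp3 iota @^-1` A).
Proof. by []. Qed.

Definition C3 (c : three) : set Cantor3 := [set x | x 0%N = c].
Lemma C3_cyl c : C3 c = cyl ord0 [:: c].
Proof. by apply/seteqP; split => x /=; [move=> h [|i]//|move=> h; apply: h]. Qed.
Lemma mC3 c : measurable (C3 c).
Proof. rewrite C3_cyl; exact: mcyl3. Qed.

Definition third : {nonneg R}%R := (((3%:R : R)^-1)%:nng)%R.


Definition t0 : three := @Ordinal 3 0 isT.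
Definition t1 : three := @Ordinal 3 1 isT.
Definition t2 : three := @Ordinal 3 2 isT.
Lemma three_cases (c : three) : c = t0 \/ c = t1 \/ c = t2.
Proof.
case: c => [[|[|[|m]]] h] //; [left|right;left|right;right]; exact: val_inj.
Qed.

Variable lam3 : probability Cantor3 R.
Hypothesis hlam3 : forall s : seq three,
      lam3 (cyl (@ord0 2 : three) s) = ((3%:R : R) ^- size s)%:E.

Lemma mpre iota A : measurable A -> measurable (comp3 iota @^-1` A).
Proof. by move=> mA; have := mcomp3 iota measurableT mA; rewrite setTI. Qed.

Lemma lam3_fin A : measurable A -> lam3 A = (fine (lam3 A))%:E.
Proof. by move=> mA; rewrite fineK // fin_num_measure. Qed.

Lemma shiftL c A : measurable A ->
  lam3 (C3 c `&` comp3 succn @^-1` A) = ((3%:R : R)^-1)%:E * lam3 A.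
Proof.
move=> mA.
have h := @uniq3 (pf (mrestr lam3 (mC3 c)) succn) (mscale third lam3) _ _ A mA.
rewrite setIC; apply: h.
- change (lam3 (comp3 succn @^-1` setT `&` C3 c) < +oo).
  rewrite preimage_setT setTI.
  exact: (le_lt_trans (probability_le1 lam3 (mC3 c))) (ltey _).
- move=> t; change (lam3 (comp3 succn @^-1` cyl ord0 t `&` C3 c) =
    ((3%:R : R)^-1)%:E * lam3 (cyl ord0 t)); rewrite hlam3.
  have -> : comp3 succn @^-1` cyl ord0 t `&` C3 c = cyl ord0 (c :: t).
    apply/seteqP; split => x /=.
      by move=> [h1 h2] [|i] //= hi; apply: h1.
    by move=> h; split; [move=> i hi; apply: (h i.+1) | apply: (h 0%N)].
  by rewrite hlam3 -EFinM /= exprS invfM.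
Qed.

Lemma shift_inv A : measurable A -> lam3 (comp3 succn @^-1` A) = lam3 A.
Proof.
move=> mA; set S := comp3 succn @^-1` A.
have mS : measurable S by exact: mpre.
have -> : S = ((C3 t0 `&` S) `|` (C3 t1 `&` S)) `|` (C3 t2 `&` S).
  apply/seteqP; split => x; last by move=> [[[_ ?]|[_ ?]]|[_ ?]].
  by move=> hx; case: (three_cases (x 0%N)) => [e|[e|e]];
    [left; left | left; right | right]; split.
have ne (a b : three) x : nat_of_ord a != nat_of_ord b -> C3 a x -> C3 b x -> False.
  by move=> hab ha hb; move: hab; rewrite /C3 /= in ha hb; rewrite -ha -hb eqxx.
have m0 : measurable (C3 t0 `&` S) by apply: measurableI => //; exact: mC3.
have m1 : measurable (C3 t1 `&` S) by apply: measurableI => //; exact: mC3.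
have m2 : measurable (C3 t2 `&` S) by apply: measurableI => //; exact: mC3.
have d01 : (C3 t0 `&` S) `&` (C3 t1 `&` S) = set0.
  by apply/seteqP; split => x // [[h1 _] [h2 _]]; exact: (ne t0 t1 x).
have d12 : ((C3 t0 `&` S) `|` (C3 t1 `&` S)) `&` (C3 t2 `&` S) = set0.
  by apply/seteqP; split => x // [[[h1 _]|[h1 _]] [h2 _]];
    [exact: (ne t0 t2 x) | exact: (ne t1 t2 x)].
have m01 : measurable ((C3 t0 `&` S) `|` (C3 t1 `&` S)) by exact: measurableU.
have HU : lam3 (((C3 t0 `&` S) `|` (C3 t1 `&` S)) `|` (C3 t2 `&` S)) =
  lam3 (C3 t0 `&` S) + lam3 (C3 t1 `&` S) + lam3 (C3 t2 `&` S).
  by rewrite measureU // measureU.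
rewrite HU.
have -> : lam3 (C3 t0 `&` S) = ((3%:R : R)^-1)%:E * lam3 A := shiftL t0 mA.
have -> : lam3 (C3 t1 `&` S) = ((3%:R : R)^-1)%:E * lam3 A := shiftL t1 mA.
have -> : lam3 (C3 t2 `&` S) = ((3%:R : R)^-1)%:E * lam3 A := shiftL t2 mA.
rewrite (lam3_fin mA) -!EFinM -!EFinD; congr EFin; by field.
Qed.


Definition Pc (iota : nat -> nat) (t : seq three) : set Cantor3 :=
  comp3 iota @^-1` cyl ord0 t.

Lemma coordL t : forall iota, (forall j, (iota j < iota j.+1)%N) ->
  lam3 (Pc iota t) = ((3%:R : R) ^- size t)%:E.
Proof.
elim: t => [|v t IH] iota hi.
  have -> : Pc iota [::] = setT by apply/seteqP; split => x.
  by rewrite probability_setT /= expr0 invr1.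
move hn: (iota 0%N) => n; elim: n iota hn hi => [|k IHk] iota hn hi.
  pose iota' j := (iota j.+1).-1.
  have hi' : forall j, (iota' j < iota' j.+1)%N.
    by move=> j; rewrite /iota'; have := hi j.+1; have := hi j; lia.
  have -> : Pc iota (v :: t) = C3 v `&` comp3 succn @^-1` Pc iota' t.
    apply/seteqP; split => x /=.
      move=> h; split; first by have := h 0%N isT; rewrite /comp3 hn.
      move=> i hi0; rewrite /comp3 /iota' prednK; last by have := hi i; lia.
      exact: (h i.+1).
    move=> [h0 h] [|i] /= hi0; first by rewrite /comp3 hn.
    have := h i hi0; rewrite /comp3 /iota' prednK //; have := hi i; lia.
  rewrite shiftL; last exact: mpre (mcyl3 _).
  by rewrite IH // -EFinM /= exprS invfM.
pose iota'' j := (iota j).-1.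
have ge : forall j, (0 < iota j)%N.
  by move=> j; have := smono_le hi (leq0n j); rewrite hn; lia.
have hi'' : forall j, (iota'' j < iota'' j.+1)%N.
  by move=> j; rewrite /iota''; have := hi j; have := ge j; lia.
have -> : Pc iota (v :: t) = comp3 succn @^-1` Pc iota'' (v :: t).
  apply/seteqP; split => x /= h i hi0; have := h i hi0;
    by rewrite /comp3 /iota'' prednK.
rewrite shift_inv; last exact: mpre (mcyl3 _).
by apply: IHk => //; rewrite /iota'' hn.
Qed.

Lemma pf_inv iota : (forall j, (iota j < iota j.+1)%N) ->
  forall A, measurable A -> lam3 (comp3 iota @^-1` A) = lam3 A.
Proof.
move=> hi A mA.
have h := @uniq3 (pf lam3 iota) lam3 _ _ A mA; apply: h.
  exact: (le_lt_trans (probability_le1 lam3 (mpre iota measurableT))) (ltey _).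
move=> t; change (lam3 (Pc iota t) = lam3 (cyl ord0 t)).
by rewrite coordL // hlam3.
Qed.

End meas.

Lemma Inf_shift (s : nat -> three) : Inf s <-> Inf (comp3 succn s).
Proof.
split => h N.
  have [n /andP[h1 h2]] := h N.+1; exists n.-1; apply/andP; split; first lia.
  by rewrite /comp3 prednK //; lia.
by have [n /andP[h1 h2]] := h N; exists n.+1; apply/andP; split => //; lia.
Qed.

Definition cb (b : bool) : three := if b then t1 else t0.

Lemma Pref_cons b sg (s : nat -> three) : Pref (b :: sg) s <->
  (s 0%N = t2 /\ Pref (b :: sg) (comp3 succn s)) \/
  (s 0%N = cb b /\ Pref sg (comp3 succn s)).
Proof.
split.
  move=> [[|n] hn] //; rewrite bitsr_shift in hn.
  case: (three_cases (s 0%N)) => [e|[e|e]]; rewrite /hb e /= in hn.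
  - by case: hn => <- hn; right; split => //; exists n.
  - by case: hn => <- hn; right; split => //; exists n.
  - by left; split => //; exists n.
move=> [[e [n hn]]|[e [n hn]]]; exists n.+1; rewrite bitsr_shift /hb e //.
by case: b e => e /=; rewrite hn.
Qed.

Lemma Dset_cons b sg : Dset (b :: sg) =
  (C3 t2 `&` comp3 succn @^-1` Dset (b :: sg)) `|`
  (C3 (cb b) `&` comp3 succn @^-1` Dset sg).
Proof.
rewrite !Dset_eq; apply/seteqP; split => s /=.
  move=> [/Inf_shift hi /Pref_cons [[e h]|[e h]]]; [left|right]; done.
by move=> [[e [hi h]]|[e [hi h]]]; split; [exact/Inf_shift| apply/Pref_cons; left |
  exact/Inf_shift | apply/Pref_cons; right].
Qed.

Section dset.
Variable R : realType.
Local Open Scope ereal_scope.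
Variable lam3 : probability Cantor3 R.
Hypothesis hlam3 : forall s : seq three,
      lam3 (cyl (@ord0 2 : three) s) = ((3%:R : R) ^- size s)%:E.

Lemma Dset_rec b sg : fine (lam3 (Dset (b :: sg))) = (fine (lam3 (Dset sg)) / 2)%R.
Proof.
have m1 := mDset (b :: sg); have m2 := mDset sg.
have e : lam3 (Dset (b :: sg)) =
    ((3%:R : R)^-1)%:E * lam3 (Dset (b :: sg)) + ((3%:R : R)^-1)%:E * lam3 (Dset sg).
  rewrite {1}Dset_cons measureU //.
  - by congr (_ + _); [exact: (shiftL hlam3 t2 m1) | exact: (shiftL hlam3 (cb b) m2)].
  - by apply: measurableI; [exact: mC3 | exact: mpre].
  - by apply: measurableI; [exact: mC3 | exact: mpre].
  - apply/seteqP; split => x // [[h1 _] [h2 _]]; move: h2; rewrite /C3 /= in h1 *; rewrite h1.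
    by case: (b) => /(congr1 val).
move: e; rewrite (lam3_fin lam3 m1) (lam3_fin lam3 m2) -!EFinM -EFinD => -[] /=.
set a := fine _; set a' := fine _ => h.
have h' : (3 * a = a + a')%R by rewrite {1}h; field.
lra.
Qed.



Definition Zs (N : nat) : set Cantor3 := \bigcap_m Pc (addn N) (nseq m t2).

Lemma mZs N : measurable (Zs N).
Proof. apply: bigcapT_measurable => m; exact: mpre (mcyl3 _). Qed.

Lemma Zs_null N : lam3 (Zs N) = 0.
Proof.
have hi : forall j, (N + j < N + j.+1)%N by move=> j; lia.
have hle : forall m, (fine (lam3 (Zs N)) <= (3%:R : R) ^- m)%R.
  move=> m; rewrite -lee_fin -(lam3_fin lam3 (mZs N)).
  have <- : lam3 (Pc (addn N) (nseq m t2)) = ((3%:R : R) ^- m)%:E.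
    by rewrite (coordL hlam3) // size_nseq.
  apply: le_measure; rewrite ?inE; [exact: mZs | exact: mpre (mcyl3 _) |].
  by move=> x hx; exact: hx m I.
rewrite (lam3_fin lam3 (mZs N)); congr EFin.
set a := fine _ in hle *.
have a0 : (0 <= a)%R by rewrite /a fine_ge0 // measure_ge0.
case: (eqVneq a 0%R) => // an0; exfalso.
have ha : (0 < a)%R by rewrite lt_neqAle eq_sym an0 a0.
set m := Num.Def.archi_bound (a^-1).
have hm : (a^-1 < m%:R)%R by apply: archi_boundP; rewrite invr_ge0.
have hm2 : ((m%:R : R) <= (3%:R : R) ^+ m)%R.
  by rewrite -natrX ler_nat; apply: ltnW; exact: ltn_expl.
have hy : (0 < (3%:R : R) ^+ m)%R by rewrite exprn_gt0.
have := hle m; set y := ((3%:R : R) ^+ m)%R in hm2 hy *.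
have e1 : (y * y^-1 = 1)%R by rewrite mulfV // lt0r_neq0.
have e2 : (a * a^-1 = 1)%R by rewrite mulfV // lt0r_neq0.
move=> h; nra.
Qed.

Lemma Inf_full : lam3 (Inf : set Cantor3) = 1.
Proof.
have hsub : ~` (Inf : set Cantor3) `<=` \bigcup_N Zs N.
  move=> s hs.
  case: (pselect (exists N, forall n, (N <= n)%N -> s n = t2)) => [[N hN]|hn].
    exists N => // m _ i; rewrite size_nseq => him.
    by rewrite /comp3 hN ?leq_addr // nth_nseq him.
  exfalso; apply: hs => N.
  case: (pselect (exists n, (N <= n)%N && nd2 (s n))) => // h'; exfalso.
  apply: hn; exists N => n hn; case e: (nd2 (s n)).
    by exfalso; apply: h'; exists n; rewrite hn e.
  by apply: val_inj => /=; move: e; rewrite /nd2 => /negbFE/eqP.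
have h0 : lam3 (~` (Inf : set Cantor3)) = 0.
  apply/eqP; rewrite -measure_le0.
  have := @measure_sigma_subadditive _ _ _ lam3 (~` (Inf : set Cantor3)) Zs mZs (measurableC mInf) hsub.
  by rewrite eseries0 // => i _ _; exact: Zs_null.
have := probability_setC lam3 (measurableC mInf); rewrite setCK h0 sube0.
done.
Qed.

Lemma Dset_val sg : lam3 (Dset sg) = ((2%:R : R) ^- size sg)%:E.
Proof.
elim: sg => [|b sg IH].
  have -> : Dset [::] = Inf.
    rewrite Dset_eq; apply/seteqP; split => s; first by case.
    by move=> h; split => //; exists 0%N.
  by rewrite Inf_full /= expr0 invr1.
rewrite (lam3_fin lam3 (mDset _)) Dset_rec IH /=; congr EFin.
by rewrite exprS invfM mulrC.
Qed.

End dset.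

Lemma binval_rcons s (b : bool) : binval (rcons s b) = ((binval s).*2 + b)%N.
Proof. by rewrite /binval foldl_rcons. Qed.

Lemma binval_lt s : (binval s < 2 ^ size s)%N.
Proof.
elim/last_ind: s => [//|s b IH]; rewrite binval_rcons size_rcons expnS -muln2.
case: b; lia.
Qed.

Definition iy (y : nat -> bool) (n : nat) : nat := (node_index (mkseq y n.+1)).-1.

Lemma iy_mono y n : (iy y n < iy y n.+1)%N.
Proof.
rewrite /iy /node_index (mkseqS y n.+1) binval_rcons size_rcons size_mkseq !expnS -muln2.
have := binval_lt (mkseq y n.+1); rewrite size_mkseq expnS.
have : (0 < 2 ^ n)%N by rewrite expn_gt0.
set p := (2 ^ n)%N; set v := binval _; case: (y n.+1) => /=; lia.
Qed.

Unset Implicit Arguments. Set Strict Implicit.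
Local Open Scope ring_scope.
Local Open Scope ereal_scope.

Theorem lemma6p1 (R : realType)
  (lam : probability Cantor2 R) (lam3 : probability Cantor3 R)
  (hlam : forall s : seq bool, lam (cyl false s) = ((2%:R : R) ^- size s)%:E)
  (hlam3 : forall s : seq three,
      lam3 (cyl (@ord0 2 : three) s) = ((3%:R : R) ^- size s)%:E)
  (sigma : seq bool) :
  \int[lam3]_x lam (F_preimage x sigma) = ((2%:R : R) ^- size sigma)%:E.
Proof.
pose E : set (Cantor3 * Cantor2) := Psi @^-1` Dset sigma.
have mE : measurable E.
  by have := mPsi measurableT (mDset sigma); rewrite setTI.
have step1 : \int[lam3]_x lam (F_preimage x sigma) = (lam3 \x lam) E.
  rewrite /product_measure1; apply: eq_integral => x _ /=.
  congr (lam _); apply/seteqP; split => y /=; rewrite /xsection /= in_setE //.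
have step2 : (lam3 \x lam) E = (lam3 \x^ lam) E.
  apply: product_measure_unique => // A B mA mB.
  exact: product_measure2E.
rewrite step1 step2 /product_measure2.
transitivity (\int[lam]_y (cst (((2%:R : R) ^- size sigma)%:E)) y).
  apply: eq_integral => y _ /=.
  have -> : ysection E y = comp3 (iy y) @^-1` Dset sigma.
    by apply/seteqP; split => x /=; rewrite /ysection /= in_setE.
  rewrite (pf_inv hlam3 (iy_mono y) (mDset sigma)).
  exact: Dset_val.
rewrite integral_cst // [X in _ * X](_ : _ = 1) ?mule1 //; exact: probability_setT.
Qed.
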